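(* Let $\mathfrak{H}$ be a Hoffman graph in which every slim vertex has exactly one fat neighbour, and suppose $\mathcal{S}(\mathfrak{H})$ is isomorphic to $\mathcal{Q}_{p,q,r}$ for some non-negative integers $p,q,r$ with $p+q\le r$. Then $\mathfrak{H}$ is an induced Hoffman subgraph of a Hoffman graph $\mathfrak{H}'$ with $V^s(\mathfrak{H}')=V^s(\mathfrak{H})$ that has a decomposition $\{\mathfrak{H}^i\}_{i=1}^r$ in which every $\mathfrak{H}^i$ is isomorphic to $\mathfrak{H}_{\rm XVI}$, $\mathfrak{H}_{\rm XVII}$, or $\mathfrak{H}_{\rm II}$. In particular, if $r\ge2$ then $\mathfrak{H}$ is $(-1-\tau)$-reducible, where $\tau=\frac{1+\sqrt5}{2}$.
   Context: A Hoffman graph $\mathfrak{H}$ is a finite simple graph $H$ together with a labeling of each vertex as slim or fat, such that every fat vertex is adjacent to at least one slim vertex and the fat vertices are pairwise non-adjacent. $V^s(\mathfrak{H})$ denotes the set of slim vertices and $N^f_{\mathfrak{H}}(x)$ the set of fat neighbours of $x$. Isomorphisms of Hoffman graphs are graph isomorphisms preserving labels. An induced Hoffman subgraph is a Hoffman graph whose underlying graph is an induced subgraph with inherited labels. Writing the adjacency matrix of $H$ with fat vertices last as $\begin{pmatrix}A_s & C\\ C^T & O\end{pmatrix}$, set $B(\mathfrak{H})=A_s-CC^T$; $\lambda_{\min}(\mathfrak{H})$ is its smallest eigenvalue. A decomposition of $\mathfrak{H}$ is a family $\{\mathfrak{H}^i\}_{i=1}^n$ of induced Hoffman subgraphs such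 that: (i) $V(\mathfrak{H})=\bigcup_i V(\mathfrak{H}^i)$; (ii) slim vertex sets of distinct members are disjoint; (iii) if $x\in V^s(\mathfrak{H}^i)$ and $y$ is a fat neighbour of $x$ in $\mathfrak{H}$, then $y\in V(\mathfrak{H}^i)$; (iv) if $x\in V^s(\mathfrak{H}^i)$, $y\in V^s(\mathfrak{H}^j)$, $i\neq j$, then $|N^f_{\mathfrak{H}}(x)\cap N^f_{\mathfrak{H}}(y)|\le 1$, with equality iff $x,y$ are adjacent. For $\alpha<0$, a Hoffman graph $\mathfrak{H}$ with $\lambda_{\min}(\mathfrak{H})\ge\alpha$ is $\alpha$-reducible if there exist a Hoffman graph $\mathfrak{H}'$ containing $\mathfrak{H}$ as an induced Hoffman subgraph and a decomposition $\{\mathfrak{H}^1,\mathfrak{H}^2\}$ of $\mathfrak{H}'$ with $\lambda_{\min}(\mathfrak{H}^i)\ge\alpha$ and $V^s(\mathfrak{H}^i)\cap V^s(\mathfrak{H})\ne\emptyset$ for $i=1,2$. The special graph $\mathcal{S}(\mathfrak{H})$ is the edge-signed graph with vertex set $V^s(\mathfrak{H})$ in which distinct $u,v$ are joined by a $(+)$-edge iff adjacent in $\mathfrak{H}$ with no common fat neighbour, by a $(-)$-edge iff non-adjacent in $\mathfrak{H}$ with a common fat neighbour, and not joined otherwise. For $p+q\le r$, $\mathcal{Q}_{p,q,r}$ is the edge-signed graph with vertex set a disjoint union $V_p\cup V_q\cup V_r$ of sizes $p,q,r$, with disjoint $U_p,U_q\subseteq V_r$ of sizes $p,q$ and bijections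 $\sigma:V_p\to U_p$, $\rho:V_q\to U_q$; $(+)$-edges: all pairs of distinct vertices of $V_r$ and all $\{v,\sigma(v)\}$, $v\in V_p$; $(-)$-edges: all $\{v,\rho(v)\}$, $v\in V_q$; no other edges. Named Hoffman graphs: $\mathfrak{H}_{\rm II}$ has one slim vertex $v$, two fat vertices $f_1,f_2$, edges $\{v,f_1\},\{v,f_2\}$. $\mathfrak{H}_{\rm XVI}$ has slim vertices $v_1,v_2$, fat vertices $f_1,f_2,f_3$, edges $\{v_1,v_2\},\{v_1,f_1\},\{v_1,f_2\},\{v_2,f_3\}$. $\mathfrak{H}_{\rm XVII}$ has slim vertices $v_1,v_2$, fat vertices $f_1,f_2$, edges $\{v_1,f_1\},\{v_1,f_2\},\{v_2,f_2\}$. *)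

(* Defs.v *)
From HB Require Import structures.
From mathcomp Require Import all_boot all_order all_algebra all_field.
Set Implicit Arguments. Unset Strict Implicit. Unset Printing Implicit Defensive.
Import Order.TTheory GRing.Theory Num.Theory.
Local Open Scope ring_scope.

(* A Hoffman graph is given by a finite vertex type V, an adjacency relation
   adj and a labelling fat (true = fat, false = slim). *)

Definition simple_graph (V : finType) (adj : rel V) :=
  symmetric adj /\ irreflexive adj.

Definition hoffman_on (V : finType) (adj : rel V) (fat : pred V) (X : {set V}) :=
  (forall x y, x \in X -> y \in X -> fat x -> fat y -> ~~ adj x y) /\
  (forall x, x \in X -> fat x -> exists2 y, y \in X & ~~ fat y && adj x y).

Definition hoffman (V : finType) (adj : rel V) (fat : pred V) :=
  simple_graph adj /\ hoffman_on adj fat setT.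

Definition fatN (V : finType) (adj : rel V) (fat : pred V) (x : V) : {set V} :=
  [set y | fat y && adj x y].

Definition embeds (V V' : finType) (adj : rel V) (fat : pred V)
  (adj' : rel V') (fat' : pred V') (f : V -> V') :=
  injective f /\ (forall x y, adj' (f x) (f y) = adj x y) /\
  (forall x, fat' (f x) = fat x).

Definition iso_on (V : finType) (adj : rel V) (fat : pred V) (X : {set V})
  (W : finType) (adjW : rel W) (fatW : pred W) :=
  exists g : W -> V, [/\ injective g, (forall v, v \in X <-> exists w, g w = v),
    (forall w w', adj (g w) (g w') = adjW w w') & (forall w, fat (g w) = fatW w)].

(* A decomposition of (V,adj,fat) indexed by 'I_n, each member given by its
   vertex set S i (an induced Hoffman subgraph). *)
Definition decomposition (V : finType) (adj : rel V) (fat : pred V) (n : nat)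
  (S : 'I_n -> {set V}) :=
  [/\ (forall i, hoffman_on adj fat (S i)),
      (forall v, exists i, v \in S i),
      (forall i j v, i != j -> v \in S i -> v \in S j -> fat v),
      (forall i x y, x \in S i -> ~~ fat x -> fat y -> adj x y -> y \in S i) &
      (forall i j x y, i != j -> x \in S i -> ~~ fat x -> y \in S j -> ~~ fat y ->
         (#|fatN adj fat x :&: fatN adj fat y| <= 1)%N /\
         ((#|fatN adj fat x :&: fatN adj fat y| == 1%N) = adj x y))].

Definition slimset (V : finType) (fat : pred V) (X : {set V}) : {set V} :=
  [set v in X | ~~ fat v].

(* B = A_s - C C^T for the induced Hoffman subgraph on X, rows/cols indexed
   by its slim vertices (enumerated). *)
Definition Bmat (V : finType) (adj : rel V) (fat : pred V) (X : {set V})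
  : 'M[algC]_#|slimset fat X| :=
  \matrix_(i, j)
    let u := enum_val i in let v := enum_val j in
    (nat_of_bool (adj u v))%:R - #|[set w in X | fat w && adj u w && adj v w]|%:R.

Definition lmin_ge (V : finType) (adj : rel V) (fat : pred V) (X : {set V})
  (a : algC) :=
  forall l : algC, eigenvalue (Bmat adj fat X) l -> a <= l.

Definition reducible (V : finType) (adj : rel V) (fat : pred V) (a : algC) :=
  lmin_ge adj fat setT a /\
  exists (V' : finType) (adj' : rel V') (fat' : pred V') (f : V -> V')
         (S : 'I_2 -> {set V'}),
    [/\ hoffman adj' fat', embeds adj fat adj' fat' f,
        decomposition adj' fat' S &
        forall i, lmin_ge adj' fat' (S i) a /\
                  exists v, ~~ fat v /\ f v \in S i].

Definition spec_sign (V : finType) (adj : rel V) (fat : pred V) (u v : V) : int :=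
  let c := #|fatN adj fat u :&: fatN adj fat v| in
  if u == v then 0
  else if adj u v && (c == 0%N) then 1
  else if ~~ adj u v && (0 < c)%N then -1
  else 0.

(* Q_{p,q,r}: vertices V_p + V_q + V_r, sigma : V_p -> V_r, rho : V_q -> V_r *)
Definition QV (p q r : nat) : finType := (('I_p + 'I_q) + 'I_r)%type.

Definition Q_sign (p q r : nat) (sigma : 'I_p -> 'I_r) (rho : 'I_q -> 'I_r)
  (x y : QV p q r) : int :=
  match x, y with
  | inr a, inr b => if a != b then 1 else 0
  | inl (inl v), inr a | inr a, inl (inl v) => if sigma v == a then 1 else 0
  | inl (inr v), inr a | inr a, inl (inr v) => if rho v == a then -1 else 0
  | _, _ => 0
  end.

Definition special_iso_Q (V : finType) (adj : rel V) (fat : pred V)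
  (p q r : nat) (sigma : 'I_p -> 'I_r) (rho : 'I_q -> 'I_r) :=
  exists phi : QV p q r -> V,
    [/\ injective phi, (forall x, ~~ fat (phi x)),
        (forall v, ~~ fat v -> exists x, phi x = v) &
        (forall x y, spec_sign adj fat (phi x) (phi y) = Q_sign sigma rho x y)].

Definition edge_in (n : nat) (E : seq (nat * nat)) : rel 'I_n :=
  fun x y => ((val x, val y) \in E) || ((val y, val x) \in E).

Definition adjII : rel 'I_3 := edge_in [:: (0,1); (0,2)]%N.
Definition fatII : pred 'I_3 := fun x => (0 < val x)%N.
(* H_XVI: slim 0 (=v1), 1 (=v2); fat 2,3,4 (=f1,f2,f3) *)
Definition adjXVI : rel 'I_5 := edge_in [:: (0,1); (0,2); (0,3); (1,4)]%N.
Definition fatXVI : pred 'I_5 := fun x => (1 < val x)%N.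
(* H_XVII: slim 0,1; fat 2,3 (=f1,f2) *)
Definition adjXVII : rel 'I_4 := edge_in [:: (0,2); (0,3); (1,3)]%N.
Definition fatXVII : pred 'I_4 := fun x => (1 < val x)%N.

Definition tau : algC := (1 + sqrtC 5%:R) / 2%:R.

(* Main.v *)
Require Import Defs.
From HB Require Import structures.
From mathcomp Require Import all_boot all_order all_algebra all_field.
From mathcomp Require Import ring.
Set Implicit Arguments. Unset Strict Implicit. Unset Printing Implicit Defensive.
Import Order.TTheory GRing.Theory Num.Theory.
Local Open Scope ring_scope.
Definition Bent (V : finType) (adj : rel V) (fat : pred V) (X : {set V}) (u v : V) : algC :=
  (nat_of_bool (adj u v))%:R - #|[set w in X | fat w && adj u w && adj v w]|%:R.
Definition QF (V : finType) (adj : rel V) (fat : pred V) (X : {set V}) (y : V -> algC) :=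
  \sum_(u in slimset fat X) \sum_(v in slimset fat X) y u * Bent adj fat X u v * (y v)^*.
Definition NF (V : finType) (fat : pred V) (X : {set V}) (y : V -> algC) :=
  \sum_(u in slimset fat X) y u * (y u)^*.

Lemma lmin_of_form (V : finType) (adj : rel V) (fat : pred V) (X : {set V}) (c : algC) :
  (forall y, 0 <= QF adj fat X y + c * NF fat X y) -> lmin_ge adj fat X (- c).
Proof.
move=> H l /eigenvalueP [v Hv vn0].
set n := #|slimset fat X| in v Hv vn0 *.
pose y u := \sum_(i < n | enum_val i == u) v 0 i.
have yE : forall i, y (enum_val i) = v 0 i.
  move=> i; rewrite /y (big_pred1 i) // => j.
  by apply/eqP/eqP => [/enum_val_inj|->].
have Q : QF adj fat X y = l * NF fat X y.
  have E1 : QF adj fat X y = \sum_(i < n) \sum_(j < n)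
      v 0 i * Bmat adj fat X i j * (v 0 j)^*.
    rewrite /QF (big_enum_val (fun u => \sum_(v in slimset fat X) y u * Bent adj fat X u v * (y v)^*)).
    apply: eq_bigr => i _.
    rewrite (big_enum_val (fun v => y (enum_val i) * Bent adj fat X (enum_val i) v * (y v)^*)).
    by apply: eq_bigr => j _; rewrite !yE mxE.
  have E2 : NF fat X y = \sum_(j < n) v 0 j * (v 0 j)^*.
    rewrite /NF (big_enum_val (fun u => y u * (y u)^*)).
    by apply: eq_bigr => j _; rewrite yE.
  rewrite E1 E2 mulr_sumr exchange_big /=.
  apply: eq_bigr => j _.
  have := congr1 (fun M : 'rV_n => M 0 j) Hv; rewrite !mxE => Hj.
  by rewrite -mulr_suml mulrA -Hj.
have NF0 : 0 < NF fat X y.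
  rewrite /NF (big_enum_val (fun u => y u * (y u)^*)).
  rewrite lt_def; apply/andP; split; last first.
    by apply: sumr_ge0 => i _; apply: mul_conjC_ge0.
  apply/negP => /eqP /psumr_eq0P Hz.
  have {Hz} Hz0 := Hz (fun i _ => mul_conjC_ge0 _).
  have {}Hz : forall i, v 0 i = 0.
    move=> i; have := Hz0 i isT; rewrite yE.
    by move/eqP; rewrite mul_conjC_eq0 => /eqP.
  apply/negP: vn0; rewrite negbK; apply/eqP/rowP => i; rewrite mxE; exact: Hz.
have := H y; rewrite Q -mulrDl pmulr_lge0 //.
by move=> h; rewrite -subr_ge0 opprK.
Qed.
Lemma tau_gt0 : 0 < tau.
Proof.
rewrite /tau divr_gt0 // ?ltr0n //.
by rewrite ltr_wpDr ?sqrtC_ge0 ?ler0n.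
Qed.
Lemma tau_conj : tau^* = tau.
Proof. by rewrite geC0_conj // ltW // tau_gt0. Qed.
Lemma tau_sq : tau * tau = tau + 1.
Proof.
have h : sqrtC 5%:R * sqrtC (5%:R : algC) = 5%:R by rewrite -expr2 sqrtCK.
have e : tau * tau - tau - 1 = (sqrtC 5%:R * sqrtC (5%:R : algC) - 5%:R) / 4%:R.
  by rewrite /tau; field.
apply/eqP; rewrite -subr_eq0 (_ : _ - _ = tau * tau - tau - 1); last by ring.
by rewrite e h subrr mul0r.
Qed.
Lemma tau_inv : tau - 1 = tau^-1.
Proof.
have t0 : tau != 0 by rewrite gt_eqF // tau_gt0.
apply: (mulfI t0); rewrite divff // mulrBr tau_sq mulr1; ring.
Qed.

Lemma sos_pair (a b e : algC) : e * e = 1 -> e^* = e ->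
  0 <= (tau - 1) * (a * a^*) + e * (a * b^* + b * a^*) + tau * (b * b^*).
Proof.
move=> ee ec.
have -> : (tau - 1) * (a * a^*) + e * (a * b^* + b * a^*) + tau * (b * b^*) =
  (tau - 1) * ((a + e * tau * b) * (a + e * tau * b)^*).
  rewrite rmorphD /= rmorphM /= rmorphM /= ec tau_conj.
  have h : (tau - 1) * tau = 1 by rewrite mulrBl tau_sq mul1r; ring.
  have -> : (tau - 1) * ((a + e * tau * b) * (a^* + e * tau * b^*)) =
     (tau - 1) * (a * a^*) + ((tau - 1) * tau) * e * (a * b^* + b * a^*)
     + ((tau - 1) * tau) * tau * (e * e) * (b * b^*) by ring.
  by rewrite h ee; ring.
apply: mulr_ge0; last exact: mul_conjC_ge0.
by rewrite tau_inv invr_ge0 ltW // tau_gt0.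
Qed.
Lemma iso_QF (V : finType) (adj : rel V) (fat : pred V) (X : {set V})
  (W : finType) (adjW : rel W) (fatW : pred W) (g : W -> V) :
  injective g -> (forall v, v \in X <-> exists w, g w = v) ->
  (forall w w', adj (g w) (g w') = adjW w w') -> (forall w, fat (g w) = fatW w) ->
  forall y, QF adj fat X y = \sum_(w in [set w | ~~ fatW w])
     \sum_(w' in [set w | ~~ fatW w]) y (g w) * ((nat_of_bool (adjW w w'))%:R
        - #|[set z | fatW z && adjW w z && adjW w' z]|%:R) * (y (g w'))^*
   /\ NF fat X y = \sum_(w in [set w | ~~ fatW w]) y (g w) * (y (g w))^*.
Proof.
move=> gi hX hadj hfat y.
have slimE : slimset fat X = g @: [set w | ~~ fatW w].
  apply/setP => u; rewrite /slimset !inE; apply/andP/imsetP.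
    by case => /hX [w <-] hf; exists w => //; rewrite inE -hfat.
  case=> w; rewrite inE => hw ->; split; last by rewrite hfat.
  by apply/hX; exists w.
have cntE : forall w w', #|[set z in X | fat z && adj (g w) z && adj (g w') z]|
     = #|[set z | fatW z && adjW w z && adjW w' z]|.
  move=> w w'; rewrite -(card_imset _ gi); apply: eq_card => u.
  rewrite !inE; apply/idP/imsetP.
    case/andP => /hX [z <-]; rewrite hfat !hadj => h; exists z => //.
    by rewrite inE.
  case=> z; rewrite inE => h ->; rewrite hfat !hadj h andbT.
  by apply/hX; exists z.
have ginj : {in [set w | ~~ fatW w] &, injective g} by move=> ? ? _ _ /gi.
split.
  rewrite /QF slimE big_imset //; apply: eq_bigr => w _.
  rewrite big_imset //; apply: eq_bigr => w' _.
  by rewrite /Bent cntE hadj.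
by rewrite /NF slimE big_imset.
Qed.

Lemma card5 (P : pred 'I_5) : #|[set z | P z]| = \sum_(i < 5) nat_of_bool (P i).
Proof. by rewrite -sum1_card big_mkcond; apply: eq_bigr => i _; rewrite inE; case: (P i). Qed.
Lemma card4 (P : pred 'I_4) : #|[set z | P z]| = \sum_(i < 4) nat_of_bool (P i).
Proof. by rewrite -sum1_card big_mkcond; apply: eq_bigr => i _; rewrite inE; case: (P i). Qed.
Lemma card3 (P : pred 'I_3) : #|[set z | P z]| = \sum_(i < 3) nat_of_bool (P i).
Proof. by rewrite -sum1_card big_mkcond; apply: eq_bigr => i _; rewrite inE; case: (P i). Qed.

Lemma sumXVI (F : 'I_5 -> algC) :
  \sum_(w in [set w | ~~ fatXVI w]) F w = F ord0 + F (lift ord0 ord0).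
Proof. by rewrite big_mkcond !big_ord_recl big_ord0 !inE /= !addr0. Qed.
Lemma sumXVII (F : 'I_4 -> algC) :
  \sum_(w in [set w | ~~ fatXVII w]) F w = F ord0 + F (lift ord0 ord0).
Proof. by rewrite big_mkcond !big_ord_recl big_ord0 !inE /= !addr0. Qed.
Lemma sumII (F : 'I_3 -> algC) :
  \sum_(w in [set w | ~~ fatII w]) F w = F ord0.
Proof. by rewrite big_mkcond !big_ord_recl big_ord0 !inE /= !addr0. Qed.

Lemma piece_XVI (V : finType) (adj : rel V) (fat : pred V) (X : {set V}) :
  iso_on adj fat X adjXVI fatXVI ->
  forall y, 0 <= QF adj fat X y + (1 + tau) * NF fat X y.
Proof.
case=> g [gi hX hadj hfat] y.
have [-> ->] := iso_QF gi hX hadj hfat y.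
rewrite !sumXVI !card5 !big_ord_recl !big_ord0 /=.
set a := y (g ord0); set b := y (g (lift ord0 ord0)).
have H := @sos_pair a b 1 (mulr1 1) (rmorph1 _).
apply: (le_trans H); rewrite le_eqVlt; apply/orP; left; apply/eqP; ring.
Qed.

Lemma piece_XVII (V : finType) (adj : rel V) (fat : pred V) (X : {set V}) :
  iso_on adj fat X adjXVII fatXVII ->
  forall y, 0 <= QF adj fat X y + (1 + tau) * NF fat X y.
Proof.
case=> g [gi hX hadj hfat] y.
have [-> ->] := iso_QF gi hX hadj hfat y.
rewrite !sumXVII !card4 !big_ord_recl !big_ord0 /=.
set a := y (g ord0); set b := y (g (lift ord0 ord0)).
have e1 : (-1 : algC) * -1 = 1 by rewrite mulrNN mulr1.
have e2 : (-1 : algC)^* = -1 by rewrite rmorphN rmorph1.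
have H := @sos_pair a b (-1) e1 e2.
apply: (le_trans H); rewrite le_eqVlt; apply/orP; left; apply/eqP; ring.
Qed.

Lemma piece_II (V : finType) (adj : rel V) (fat : pred V) (X : {set V}) :
  iso_on adj fat X adjII fatII ->
  forall y, 0 <= QF adj fat X y + (1 + tau) * NF fat X y.
Proof.
case=> g [gi hX hadj hfat] y.
have [-> ->] := iso_QF gi hX hadj hfat y.
rewrite !sumII !card3 !big_ord_recl !big_ord0 /=.
set a := y (g ord0).
have H : 0 <= (tau - 1) * (a * a^*).
  by apply: mulr_ge0; [rewrite tau_inv invr_ge0 ltW // tau_gt0 | exact: mul_conjC_ge0].
apply: (le_trans H); rewrite le_eqVlt; apply/orP; left; apply/eqP; ring.
Qed.
Lemma cnt_in (V : finType) (adj : rel V) (fat : pred V) (Y : {set V}) (u v : V) :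
  (forall w, fat w -> adj u w -> w \in Y) ->
  #|[set w in Y | fat w && adj u w && adj v w]| = #|fatN adj fat u :&: fatN adj fat v|.
Proof.
move=> hY; apply: eq_card => w; rewrite !inE.
case fw: (fat w); case auw: (adj u w) => /=; rewrite ?andbF //.
by rewrite hY.
Qed.

Lemma sum_split (V : finType) (fat : pred V) n (S : 'I_n -> {set V})
  (I : {set 'I_n}) (X : {set V}) (F : V -> algC) :
  (forall i j v, i != j -> v \in S i -> v \in S j -> fat v) ->
  (forall u, ~~ fat u -> (u \in X) = [exists i in I, u \in S i]) ->
  \sum_(u in slimset fat X) F u = \sum_(i in I) \sum_(u in slimset fat (S i)) F u.
Proof.
move=> hdis hX.
rewrite (eq_bigr (fun i => \sum_u (if u \in slimset fat (S i) then F u else 0)));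
  last by move=> i _; rewrite big_mkcond.
rewrite exchange_big /= big_mkcond; apply: eq_bigr => u _.
rewrite /slimset inE.
case fu: (fat u) => /=; first by rewrite andbF big1 // => i _; rewrite inE fu andbF.
rewrite hX; last by rewrite fu.
case: (boolP [exists i in I, u \in S i]) => [/existsP [i /andP [iI uS]] | hn].
  rewrite (bigD1 i) //= inE uS fu /= big1 ?addr0 // => j /andP [jI ji].
  rewrite inE; case uSj: (u \in S j) => //=.
  by have := hdis _ _ _ ji uSj uS; rewrite fu.
rewrite big1 // => i iI; rewrite inE.
case uSi: (u \in S i) => //=.
by move: hn; rewrite negb_exists => /forallP /(_ i); rewrite iI uSi.
Qed.

Lemma decomp_QF (V : finType) (adj : rel V) (fat : pred V) n (S : 'I_n -> {set V})
  (I : {set 'I_n}) (X : {set V}) :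
  decomposition adj fat S ->
  (forall u, ~~ fat u -> (u \in X) = [exists i in I, u \in S i]) ->
  (forall i, i \in I -> S i \subset X) ->
  forall y, QF adj fat X y = \sum_(i in I) QF adj fat (S i) y /\
            NF fat X y = \sum_(i in I) NF fat (S i) y.
Proof.
case=> [hh hcov hdis hfn hiv] hX hsub y.
split; last by rewrite /NF (sum_split _ hdis hX).
rewrite /QF (sum_split _ hdis hX); apply: eq_bigr => i iI.
apply: eq_bigr => u; rewrite inE => /andP [uS fu].
rewrite (sum_split _ hdis hX) (bigD1 i) //= [Z in _ + Z]big1 ?addr0.
  apply: eq_bigr => v _; congr (_ * _ * _); rewrite /Bent (cnt_in _ _ (Y := X)).
    rewrite (cnt_in _ _ (Y := S i)) // => w fw auw; exact: hfn _ _ _ uS fu fw auw.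
  move=> w fw auw; apply: (subsetP (hsub _ iI)); exact: hfn _ _ _ uS fu fw auw.
move=> j /andP [jI ji]; apply: big1 => v; rewrite inE => /andP [vS fv].
rewrite /Bent (cnt_in _ _ (Y := X)); last first.
  move=> w fw auw; apply: (subsetP (hsub _ iI)); exact: hfn _ _ _ uS fu fw auw.
have ij : i != j by rewrite eq_sym.
have [h1 h2] := hiv i j u v ij uS fu vS fv.
suff -> : (nat_of_bool (adj u v))%:R - #|fatN adj fat u :&: fatN adj fat v|%:R = 0 :> algC
  by rewrite mulr0 mul0r.
apply/eqP; rewrite subr_eq0 eqr_nat -h2.
by case: (#|_|) h1 => [|[|k]].
Qed.
Lemma sum_opt (R : nmodType) (V : finType) (F : option V -> R) :
  \sum_(w : option V) F w = F None + \sum_(x : V) F (Some x).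
Proof.
rewrite (bigD1 None) //=; congr (_ + _).
have -> : \sum_(x : V) F (Some x) = \sum_(w in Some @: [set: V]) F w.
  by rewrite big_imset /=; [apply: eq_bigl => x; rewrite inE | move=> x y _ _ []].
apply: eq_bigl => w; case: w => [x|] /=.
  by apply/esym/imsetP; exists x; rewrite ?inE.
by apply/esym/imsetP => -[].
Qed.

Lemma slim_opt (V : finType) (fat : pred V) (fat' : pred (option V)) (G : option V -> algC) :
  (forall x, fat' (Some x) = fat x) -> fat' None ->
  \sum_(w in slimset fat' setT) G w = \sum_(x in slimset fat setT) G (Some x).
Proof.
move=> hf hN; rewrite big_mkcond sum_opt [in RHS]big_mkcond /= !inE hN /= add0r.
by apply: eq_bigr => x _; rewrite !inE hf.
Qed.

Lemma embed_opt (V : finType) (adj : rel V) (fat : pred V)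
  (adj' : rel (option V)) (fat' : pred (option V)) (s : V -> bool) (y : V -> algC) :
  (forall x y, adj' (Some x) (Some y) = adj x y) -> (forall x, fat' (Some x) = fat x) ->
  fat' None -> (forall x, adj' (Some x) None = s x) ->
  let y' := fun w => if w is Some x then y x else 0 in
  let S := \sum_(u in slimset fat setT) (nat_of_bool (s u))%:R * y u in
  QF adj fat setT y = QF adj' fat' setT y' + S * S^* /\
  NF fat setT y = NF fat' setT y'.
Proof.
move=> ha hf hN hs y' S.
split; last by rewrite /NF (slim_opt _ hf hN).
have cntE : forall u v, #|[set w in setT | fat' w && adj' (Some u) w && adj' (Some v) w]|
   = (#|[set w in setT | fat w && adj u w && adj v w]| + (s u && s v))%N.
  move=> u v; rewrite -!sum1_card !(big_mkcond (fun w => _ \in _)) /= sum_opt.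
  rewrite !inE hN /= !hs addnC; congr (_ + _)%N.
  by apply: eq_bigr => x _; rewrite !inE hf !ha.
rewrite /QF (slim_opt _ hf hN) /S rmorph_sum /= mulr_suml.
rewrite -[RHS]big_split /=; apply: eq_bigr => u _.
rewrite (slim_opt _ hf hN) mulr_sumr -[RHS]big_split /=; apply: eq_bigr => v _.
rewrite /Bent /y' cntE ha !rmorphM /= rmorph_nat natrD.
case: (s u); case: (s v) => /=; ring.
Qed.
Lemma pieces_form (V : finType) (adj : rel V) (fat : pred V) n (S : 'I_n -> {set V})
  (I : {set 'I_n}) (X : {set V}) (c : algC) :
  decomposition adj fat S ->
  (forall u, ~~ fat u -> (u \in X) = [exists i in I, u \in S i]) ->
  (forall i, i \in I -> S i \subset X) ->
  (forall i, i \in I -> forall y, 0 <= QF adj fat (S i) y + c * NF fat (S i) y) ->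
  forall y, 0 <= QF adj fat X y + c * NF fat X y.
Proof.
move=> hd hX hs hp y; have [-> ->] := decomp_QF hd hX hs y.
rewrite mulr_sumr -big_split /=; apply: sumr_ge0 => i iI; exact: hp.
Qed.

Lemma piece_form (V : finType) (adj : rel V) (fat : pred V) (X : {set V}) :
  [\/ iso_on adj fat X adjXVI fatXVI, iso_on adj fat X adjXVII fatXVII |
      iso_on adj fat X adjII fatII] ->
  forall y, 0 <= QF adj fat X y + (1 + tau) * NF fat X y.
Proof. by case=> [/piece_XVI|/piece_XVII|/piece_II]. Qed.

Definition merge2 (V : finType) n (S : 'I_n -> {set V}) (i0 : 'I_n) (k : 'I_2)
  : {set V} := if val k == 0%N then S i0 else \bigcup_(i | i != i0) S i.

Lemma merge2_mem (V : finType) n (S : 'I_n -> {set V}) (i0 : 'I_n) (k : 'I_2) v :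
  v \in merge2 S i0 k -> exists i, v \in S i /\ ((i == i0) = (val k == 0%N)).
Proof.
rewrite /merge2; case: ifP => hk.
  by move=> h; exists i0; rewrite eqxx.
by case/bigcupP => i hi h; exists i; rewrite (negbTE hi).
Qed.

Lemma merge2_in (V : finType) n (S : 'I_n -> {set V}) (i0 : 'I_n) (k : 'I_2) i v :
  v \in S i -> (i == i0) = (val k == 0%N) -> v \in merge2 S i0 k.
Proof.
rewrite /merge2 => h; case: ifP => hk e.
  by move/eqP: e => <-.
by apply/bigcupP; exists i => //; rewrite e.
Qed.

Lemma merge2_dec (V : finType) (adj : rel V) (fat : pred V) n (S : 'I_n -> {set V})
  (i0 : 'I_n) : hoffman adj fat -> decomposition adj fat S ->
  decomposition adj fat (merge2 S i0).
Proof.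
move=> [_ [hfn _]] [hh hcov hdis hfn2 hiv].
have kk : forall k k' : 'I_2, k != k' -> (val k == 0%N) != (val k' == 0%N).
  by case=> [[|[|]]] // ? [[|[|]]].
split.
- move=> k; split.
    by move=> x y _ _; apply: hfn; rewrite inE.
  move=> x /merge2_mem [i [xi e]] fx.
  have [_ hz] := hh i; have [z' z'i hz'] := hz _ xi fx.
  by exists z' => //; apply: merge2_in z'i e.
- move=> v; have [i vi] := hcov v.
  exists (if i == i0 then ord0 else ord_max); apply: (merge2_in vi).
  by case: (i == i0).
- move=> k k' v kk' /merge2_mem [i [vi e]] /merge2_mem [j [vj e']].
  apply: (hdis i j) => //; apply/eqP => ij; move: (kk _ _ kk').
  by rewrite -e -e' ij eqxx.
- move=> k x y /merge2_mem [i [xi e]] fx fy axy.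
  exact: merge2_in (hfn2 _ _ _ xi fx fy axy) e.
- move=> k k' x y kk' /merge2_mem [i [xi e]] fx /merge2_mem [j [yj e']] fy.
  apply: (hiv i j) => //; apply/eqP => ij; move: (kk _ _ kk').
  by rewrite -e -e' ij eqxx.
Qed.

Lemma tauE : -1 - tau = - (1 + tau).
Proof. by rewrite opprD. Qed.

Lemma merge2_lmin (V : finType) (adj : rel V) (fat : pred V) n (S : 'I_n -> {set V})
  (i0 : 'I_n) : decomposition adj fat S ->
  (forall i, [\/ iso_on adj fat (S i) adjXVI fatXVI, iso_on adj fat (S i) adjXVII fatXVII |
      iso_on adj fat (S i) adjII fatII]) ->
  forall k, lmin_ge adj fat (merge2 S i0 k) (-1 - tau).
Proof.
move=> hd hp k; rewrite tauE; apply: lmin_of_form; rewrite /merge2.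
case: ifP => _; first exact: piece_form.
apply: (pieces_form (I := [set i | i != i0]) hd).
- move=> u _; apply/bigcupP/existsP => [[i hi ui]|[i /andP [hi ui]]]; exists i => //.
    by rewrite inE hi.
  by move: hi; rewrite inE.
- by move=> i; rewrite inE => hi; apply: bigcup_sup.
- by move=> i _; apply: piece_form.
Qed.

Lemma whole_lmin (V : finType) (adj : rel V) (fat : pred V) n
  (adj' : rel (option V)) (fat' : pred (option V)) (s : V -> bool)
  (S : 'I_n -> {set option V}) :
  (forall x y, adj' (Some x) (Some y) = adj x y) -> (forall x, fat' (Some x) = fat x) ->
  fat' None -> (forall x, adj' (Some x) None = s x) ->
  decomposition adj' fat' S ->
  (forall i, [\/ iso_on adj' fat' (S i) adjXVI fatXVI, iso_on adj' fat' (S i) adjXVII fatXVII |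
      iso_on adj' fat' (S i) adjII fatII]) ->
  lmin_ge adj fat setT (-1 - tau).
Proof.
move=> ha hf hN hs hd hp; rewrite tauE; apply: lmin_of_form => y.
have [-> ->] := embed_opt y ha hf hN hs.
set y' := fun w => _.
rewrite addrAC; apply: addr_ge0; last exact: mul_conjC_ge0.
apply: (pieces_form (I := setT) hd).
- move=> u _; rewrite inE; apply/esym/existsP.
  by case: hd => _ hcov _ _ _; have [i hi] := hcov u; exists i; rewrite inE.
- by move=> i _; apply/subsetP => z; rewrite inE.
- by move=> i _; apply: piece_form.
Qed.
Definition owner p q r (sigma : 'I_p -> 'I_r) (rho : 'I_q -> 'I_r) (x : QV p q r) : 'I_r :=
  match x with inl (inl v) => sigma v | inl (inr w) => rho w | inr a => a end.
Definition isR p q r (x : QV p q r) : bool := if x is inr _ then true else false.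
Definition fa (V : finType) (adj : rel V) (fat : pred V) (u : V) : V :=
  odflt u [pick w in fatN adj fat u].

Record ctx (V : finType) (adj : rel V) (fat : pred V) p q r
  (sigma : 'I_p -> 'I_r) (rho : 'I_q -> 'I_r) (phi : QV p q r -> V) : Prop := Ctx {
  c_hoff : hoffman adj fat;
  c_one : forall v, ~~ fat v -> #|fatN adj fat v| = 1%N;
  c_sinj : injective sigma;
  c_rinj : injective rho;
  c_sr : forall a b, sigma a != rho b;
  c_pinj : injective phi;
  c_pslim : forall x, ~~ fat (phi x);
  c_psurj : forall v, ~~ fat v -> exists x, phi x = v;
  c_sign : forall x y, spec_sign adj fat (phi x) (phi y) = Q_sign sigma rho x y }.

Lemma fa_spec V adj fat p q r sigma rho phi (C : @ctx V adj fat p q r sigma rho phi) u :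
  ~~ fat u -> [/\ fat (fa adj fat u), adj u (fa adj fat u) &
     forall w, fat w -> adj u w -> w = fa adj fat u].
Proof.
move=> fu; have [z hz] := cards1P (introT eqP (c_one C fu)).
have ez : fa adj fat u = z.
  rewrite /fa; case: pickP => [w|/(_ z)]; last by rewrite hz inE eqxx.
  by rewrite hz inE => /eqP.
have : z \in fatN adj fat u by rewrite hz inE.
rewrite ez inE => /andP [fz az]; split => // w fw aw.
by apply/set1P; rewrite -hz inE fw aw.
Qed.

Lemma fatN1 V adj fat p q r sigma rho phi (C : @ctx V adj fat p q r sigma rho phi) u :
  ~~ fat u -> fatN adj fat u = [set fa adj fat u].
Proof.
move=> fu; have [h1 h2 h3] := fa_spec C fu.
apply/setP => w; rewrite !inE; apply/andP/eqP => [[] | ->]; first exact: h3.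
by split.
Qed.

Lemma adj_fat V adj fat p q r sigma rho phi (C : @ctx V adj fat p q r sigma rho phi) x w :
  fat w -> adj (phi x) w = (w == fa adj fat (phi x)).
Proof.
move=> fw; have [h1 h2 h3] := fa_spec C (c_pslim C x).
apply/idP/eqP => [|->] //; exact: h3.
Qed.

Lemma cntP V adj fat p q r sigma rho phi (C : @ctx V adj fat p q r sigma rho phi) x y :
  #|fatN adj fat (phi x) :&: fatN adj fat (phi y)| =
  nat_of_bool (fa adj fat (phi x) == fa adj fat (phi y)).
Proof.
rewrite !(fatN1 C) ?(c_pslim C) //.
case: eqP => [->|ne]; first by rewrite setIid cards1.
apply/eqP; rewrite cards_eq0; apply/eqP/setP => w; rewrite !inE.
by apply/andP => -[/eqP -> /eqP].
Qed.

Lemma adjPP V adj fat p q r sigma rho phi (C : @ctx V adj fat p q r sigma rho phi) x y :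
  x != y ->
  [/\ Q_sign sigma rho x y == 0 -> adj (phi x) (phi y) = (fa adj fat (phi x) == fa adj fat (phi y)),
      Q_sign sigma rho x y == 1 -> adj (phi x) (phi y) /\ fa adj fat (phi x) != fa adj fat (phi y) &
      Q_sign sigma rho x y == -1 -> ~~ adj (phi x) (phi y) /\ fa adj fat (phi x) == fa adj fat (phi y)].
Proof.
move=> nxy; rewrite -(c_sign C) /spec_sign (inj_eq (c_pinj C)) (negbTE nxy) (cntP C).
by case: (adj (phi x) (phi y)); case: (fa adj fat (phi x) == fa adj fat (phi y)).
Qed.

Lemma Q_diff p q r (sigma : 'I_p -> 'I_r) (rho : 'I_q -> 'I_r) x y :
  owner sigma rho x != owner sigma rho y ->
  Q_sign sigma rho x y = if isR x && isR y then 1 else 0.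
Proof.
case: x => [[v|w]|a]; case: y => [[v'|w']|b] //= h.
- by rewrite (negbTE h).
- by rewrite (negbTE h).
- by rewrite eq_sym (negbTE h).
- by rewrite eq_sym (negbTE h).
- by rewrite h.
Qed.

Definition adjO (V : finType) (adj : rel V) (s : pred V) : rel (option V) :=
  fun a b => match a, b with
  | Some x, Some y => adj x y | Some x, None => s x | None, Some y => s y
  | None, None => false end.
Definition fatO (V : finType) (fat : pred V) : pred (option V) :=
  fun z => if z is Some x then fat x else true.
Definition inR (V : finType) p q r (phi : QV p q r -> V) : pred V :=
  fun x => [exists a, phi (inr a) == x].
Definition Sset (V : finType) (adj : rel V) (fat : pred V) p q r
  (sigma : 'I_p -> 'I_r) (rho : 'I_q -> 'I_r) (phi : QV p q r -> V) (i : 'I_r)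
  : {set option V} :=
  [set z | if z is Some y then [exists x, (owner sigma rho x == i) &&
     ((y == phi x) || (y == fa adj fat (phi x)))] else true].

Lemma inR_P V adj fat p q r sigma rho phi (C : @ctx V adj fat p q r sigma rho phi) x :
  inR phi (phi x) = isR x.
Proof.
apply/existsP/idP => [[a /eqP /(c_pinj C) <-] // | ].
by case: x => // a _; exists a.
Qed.

Lemma inR_fat V adj fat p q r sigma rho phi (C : @ctx V adj fat p q r sigma rho phi) w :
  fat w -> inR phi w = false.
Proof.
move=> fw; apply/existsP => -[a /eqP e]; have := c_pslim C (inr a).
by rewrite e fw.
Qed.

Lemma fa_fat V adj fat p q r sigma rho phi (C : @ctx V adj fat p q r sigma rho phi) x :
  fat (fa adj fat (phi x)).
Proof. by have [] := fa_spec C (c_pslim C x). Qed.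

Lemma fa_neq V adj fat p q r sigma rho phi (C : @ctx V adj fat p q r sigma rho phi) x y :
  (fa adj fat (phi x) == phi y) = false.
Proof.
apply/negbTE/eqP => e; have := c_pslim C y; by rewrite -e (fa_fat C).
Qed.

Lemma memS_slim V adj fat p q r sigma rho phi (C : @ctx V adj fat p q r sigma rho phi) x i :
  (Some (phi x) \in Sset adj fat sigma rho phi i) = (owner sigma rho x == i).
Proof.
rewrite inE; apply/existsP/idP => [[x' /andP [o /orP [/eqP /(c_pinj C) -> //| ]]] | o].
  by rewrite eq_sym (fa_neq C).
by exists x; rewrite o eqxx.
Qed.

Lemma memS_fa V adj fat p q r sigma rho phi (C : @ctx V adj fat p q r sigma rho phi) x :
  Some (fa adj fat (phi x)) \in Sset adj fat sigma rho phi (owner sigma rho x).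
Proof. by rewrite inE; apply/existsP; exists x; rewrite !eqxx orbT. Qed.

Lemma memS_None V adj fat p q r sigma rho phi i :
  None \in @Sset V adj fat p q r sigma rho phi i.
Proof. by rewrite inE. Qed.

Lemma slimO V adj fat p q r sigma rho phi (C : @ctx V adj fat p q r sigma rho phi) z :
  ~~ fatO fat z -> exists x, z = Some (phi x).
Proof.
case: z => //= y fy; have [x <-] := c_psurj C fy; by exists x.
Qed.

Lemma adjO_sym (V : finType) (adj : rel V) (s : pred V) : symmetric adj -> symmetric (adjO adj s).
Proof. by move=> hs [x|] [y|] //=; rewrite hs. Qed.

Lemma hoffO V adj fat p q r sigma rho phi (C : @ctx V adj fat p q r sigma rho phi) (i0 : 'I_r) :
  hoffman (adjO adj (inR phi)) (fatO fat).
Proof.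
have [[hs hi] [hf1 hf2]] := c_hoff C.
split; first split.
- exact: adjO_sym.
- by move=> [x|] //=; rewrite hi.
split.
- move=> [x|] [y|] _ _ //=.
  + by move=> fx fy; apply: hf1; rewrite ?inE.
  + by move=> fx _; rewrite (inR_fat C).
  + by move=> _ fy; rewrite (inR_fat C).
- move=> [x|] _ /= fx.
  + have [y _ /andP [fy axy]] := hf2 x (in_setT x) fx.
    by exists (Some y); rewrite ?inE //= fy.
  + by exists (Some (phi (inr i0))); rewrite ?inE //= (c_pslim C) (inR_P C).
Qed.

Lemma card_opt (V : finType) (A : {set option V}) :
  #|A| = ((None \in A) + #|[set x | Some x \in A]|)%N.
Proof.
rewrite -!sum1_card !big_mkcond /= sum_opt; congr (_ + _)%N.
rewrite [RHS]big_mkcond /=; apply: eq_bigr => x _; by rewrite inE.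
Qed.

Lemma cntO V adj fat p q r sigma rho phi (C : @ctx V adj fat p q r sigma rho phi) x y :
  #|fatN (adjO adj (inR phi)) (fatO fat) (Some (phi x)) :&:
    fatN (adjO adj (inR phi)) (fatO fat) (Some (phi y))| =
  ((isR x && isR y) + (fa adj fat (phi x) == fa adj fat (phi y)))%N.
Proof.
rewrite card_opt -(cntP C) !inE /= !(inR_P C); congr (_ + _)%N.
by apply: eq_card => w; rewrite !inE.
Qed.

Lemma decO V adj fat p q r sigma rho phi (C : @ctx V adj fat p q r sigma rho phi) (i0 : 'I_r) :
  decomposition (adjO adj (inR phi)) (fatO fat) (Sset adj fat sigma rho phi).
Proof.
have [[hs hi] [hf1 hf2]] := c_hoff C.
have [[hsO hiO] [hf1O hf2O]] := hoffO C i0.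
split.
- move=> i; split; first by move=> x y _ _; apply: hf1O; rewrite inE.
  move=> [y|] yi /= fy; last first.
    exists (Some (phi (inr i))); first by rewrite (memS_slim C).
    by rewrite /= (c_pslim C) (inR_P C).
  move: yi; rewrite inE => /existsP [x /andP [/eqP o /orP [/eqP e|/eqP e]]].
    by move: fy; rewrite e (negbTE (c_pslim C x)).
  exists (Some (phi x)); first by rewrite (memS_slim C) o.
  by rewrite /= (c_pslim C) e hs (adj_fat C) ?(fa_fat C) ?eqxx.
- move=> [y|]; last by exists i0; rewrite memS_None.
  case fy: (fat y).
    have [u _ /andP [fu ayu]] := hf2 y (in_setT y) fy.
    have [x ex] := c_psurj C fu.
    exists (owner sigma rho x); move: ayu; rewrite -ex hs (adj_fat C) // => /eqP ->.
    exact: memS_fa.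
  have [x ex] := c_psurj C (negbT fy).
  by exists (owner sigma rho x); rewrite -ex (memS_slim C).
- move=> i j [y|] ij //; rewrite !inE => /existsP [x /andP [/eqP o /orP [/eqP e|/eqP e]]];
    last by rewrite /= e (fa_fat C).
  move=> /existsP [x' /andP [/eqP o' /orP [/eqP e'|/eqP e']]];
    last by rewrite /= e' (fa_fat C).
  move: e'; rewrite e => /(c_pinj C) ex; move: ij; by rewrite -o -o' ex eqxx.
- move=> i [x0|] y //.
  move=> xi fx; have [x [ex]] := slimO C fx; subst x0.
  move: xi; rewrite (memS_slim C) => /eqP <-.
  case: y => [y|] fy; last by rewrite memS_None.
  by rewrite /= (adj_fat C) // => /eqP ->; apply: memS_fa.
- move=> i j x0 y0 ij xi fx yj fy.
  have [x ex] := slimO C fx; have [y ey] := slimO C fy; subst x0 y0.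
  move: xi yj; rewrite !(memS_slim C) => /eqP oi /eqP oj.
  have no : owner sigma rho x != owner sigma rho y by rewrite oi oj.
  have nxy : x != y by apply: contraNneq no => ->.
  have [h0 h1 _] := adjPP C nxy.
  rewrite (cntO C) /=.
  case R: (isR x && isR y).
    have hq : Q_sign sigma rho x y == 1 by rewrite (Q_diff no) R.
    by have [-> /negbTE ->] := h1 hq.
  rewrite h0; last by rewrite (Q_diff no) R.
  by case: (_ == _).
Qed.

Lemma owner_cases p q r (sigma : 'I_p -> 'I_r) (rho : 'I_q -> 'I_r) (x : QV p q r) i :
  owner sigma rho x = i ->
  [\/ x = inr i, exists2 v, x = inl (inl v) & sigma v = i |
      exists2 w, x = inl (inr w) & rho w = i].
Proof.
case: x => [[v|w]|a] /= e; subst i.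
- by apply: Or32; exists v.
- by apply: Or33; exists w.
- exact: Or31.
Qed.

Lemma inj_dec (T : finType) n (g : 'I_n -> T) (k : T -> nat) :
  (forall w, k (g w) = val w) -> injective g.
Proof. by move=> hk w w' e; apply: val_inj; rewrite -hk e hk. Qed.

Lemma iso_pieces V adj fat p q r sigma rho phi (C : @ctx V adj fat p q r sigma rho phi)
  (i0 : 'I_r) i :
  let S := Sset adj fat sigma rho phi i in
  let adj' := adjO adj (inR phi) in let fat' := fatO fat in
  [\/ iso_on adj' fat' S adjXVI fatXVI, iso_on adj' fat' S adjXVII fatXVII |
      iso_on adj' fat' S adjII fatII].
Proof.
move=> S adj' fat'.
have [[hs hi] [hf1 hf2]] := c_hoff C.
pose P := phi; pose F x := fa adj fat (phi x).
have aPF : forall x y, adj (P x) (F y) = (F y == F x).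
  by move=> x y; rewrite (adj_fat C) ?(fa_fat C) // eq_sym.
have aFP : forall x y, adj (F y) (P x) = (F y == F x) by move=> x y; rewrite hs aPF.
have aFF : forall x y, adj (F x) (F y) = false.
  by move=> x y; apply/negbTE/hf1; rewrite ?inE ?(fa_fat C).
have aPP : forall x, adj (P x) (P x) = false by move=> x; rewrite hi.
have iP : forall x, inR phi (P x) = isR x by move=> x; rewrite (inR_P C).
have iF : forall x, inR phi (F x) = false by move=> x; rewrite (inR_fat C) ?(fa_fat C).
have FP : forall x y, (F x == P y) = false by move=> x y; rewrite (fa_neq C).
have PP : forall x y, x != y -> (P x == P y) = false.
  by move=> x y nxy; apply/negbTE; rewrite (inj_eq (c_pinj C)).
have memP : forall x, owner sigma rho x = i -> Some (P x) \in S.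
  by move=> x o; rewrite /S (memS_slim C) o.
have memF : forall x, owner sigma rho x = i -> Some (F x) \in S.
  by move=> x o; rewrite /S -o; apply: (memS_fa C).
have memSP : forall y, Some y \in S -> exists2 x, owner sigma rho x = i & y = P x \/ y = F x.
  move=> y; rewrite inE => /existsP [x /andP [/eqP o /orP [/eqP e|/eqP e]]].
    by exists x => //; left.
  by exists x => //; right.
case: (pickP (fun v => sigma v == i)) => [v /eqP sv|nv].
  apply: Or31.
  pose a : QV p q r := inr i; pose b : QV p q r := inl (inl v).
  have nab : a != b by [].
  have [_ h1 _] := adjPP C nab.
  have q1 : Q_sign sigma rho a b == 1 by rewrite /= sv eqxx.
  have [hab nfab] := h1 q1.
  have hba : adj (P b) (P a) by rewrite hs.
  have fab : (F a == F b) = false by apply/negbTE.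
  have fba : (F b == F a) = false by rewrite eq_sym.
  pose g (w : 'I_5) : option V := match val w with
    | 0 => Some (P a) | 1 => Some (P b) | 2 => Some (F a) | 3 => None | _ => Some (F b) end.
  exists g; split.
  - pose k (z : option V) : nat := match z with None => 3 | Some y =>
      if y == P a then 0 else if y == P b then 1 else if y == F a then 2 else 4 end.
    apply: (inj_dec (k := k)) => -[[|[|[|[|[|m]]]]] hm] //=; rewrite /k.
    + by rewrite eqxx.
    + by rewrite PP // eqxx.
    + by rewrite !FP eqxx.
    + by rewrite !FP fba.
  - move=> z; split; last first.
      move=> [[[|[|[|[|[|m]]]]] hm] <-] //=.
      + exact: memP. + exact: memP. + exact: memF. + exact: memS_None. + exact: memF.
    case: z => [y|]; last by move=> _; exists (Ordinal (isT : (3 < 5)%N)).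
    case/memSP => x /owner_cases [->|[v' -> sv']|[w -> rw]] [->|->].
    + by exists (Ordinal (isT : (0 < 5)%N)).
    + by exists (Ordinal (isT : (2 < 5)%N)).
    + have ev : v' = v by apply: (c_sinj C); rewrite sv sv'.
      by subst v'; exists (Ordinal (isT : (1 < 5)%N)).
    + have ev : v' = v by apply: (c_sinj C); rewrite sv sv'.
      by subst v'; exists (Ordinal (isT : (4 < 5)%N)).
    + by have := c_sr C v w; rewrite sv rw eqxx.
    + by have := c_sr C v w; rewrite sv rw eqxx.
  - move=> -[[|[|[|[|[|m]]]]] hm] -[[|[|[|[|[|m']]]]] hm'] //=;
      rewrite ?aPF ?aFP ?aFF ?aPP ?iP ?iF ?eqxx ?fab ?fba ?hab ?hba //.
  - by move=> -[[|[|[|[|[|m]]]]] hm] //=; rewrite ?(negbTE (c_pslim C _)) ?(fa_fat C).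
case: (pickP (fun w => rho w == i)) => [w /eqP rw|nw].
  apply: Or32.
  pose a : QV p q r := inr i; pose b : QV p q r := inl (inr w).
  have nab : a != b by [].
  have [_ _ h2] := adjPP C nab.
  have q1 : Q_sign sigma rho a b == -1 by rewrite /= rw eqxx.
  have [/negbTE hab fab] := h2 q1.
  have hba : adj (P b) (P a) = false by rewrite hs.
  have fba : (F b == F a) by rewrite eq_sym.
  pose g (w : 'I_4) : option V := match val w with
    | 0 => Some (P a) | 1 => Some (P b) | 2 => None | _ => Some (F a) end.
  exists g; split.
  - pose k (z : option V) : nat := match z with None => 2 | Some y =>
      if y == P a then 0 else if y == P b then 1 else 3 end.
    apply: (inj_dec (k := k)) => -[[|[|[|[|m]]]] hm] //=; rewrite /k.
    + by rewrite eqxx.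
    + by rewrite PP // eqxx.
    + by rewrite !FP.
  - move=> z; split; last first.
      move=> [[[|[|[|[|m]]]] hm] <-] //=.
      + exact: memP. + exact: memP. + exact: memS_None. + exact: memF.
    case: z => [y|]; last by move=> _; exists (Ordinal (isT : (2 < 4)%N)).
    case/memSP => x /owner_cases [->|[v' -> sv']|[w' -> rw']] [->|->].
    + by exists (Ordinal (isT : (0 < 4)%N)).
    + by exists (Ordinal (isT : (3 < 4)%N)).
    + by have := nv v'; rewrite sv' eqxx.
    + by have := nv v'; rewrite sv' eqxx.
    + have ew : w' = w by apply: (c_rinj C); rewrite rw rw'.
      by subst w'; exists (Ordinal (isT : (1 < 4)%N)).
    + have ew : w' = w by apply: (c_rinj C); rewrite rw rw'.
      by subst w'; exists (Ordinal (isT : (3 < 4)%N)); rewrite /=; congr Some; apply/eqP.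
  - move=> -[[|[|[|[|m]]]] hm] -[[|[|[|[|m']]]] hm'] //=;
      rewrite ?aPF ?aFP ?aFF ?aPP ?iP ?iF ?eqxx ?fab ?fba ?hab ?hba //.
  - by move=> -[[|[|[|[|m]]]] hm] //=; rewrite ?(negbTE (c_pslim C _)) ?(fa_fat C).
apply: Or33.
pose a : QV p q r := inr i.
pose g (w : 'I_3) : option V := match val w with
  | 0 => Some (P a) | 1 => Some (F a) | _ => None end.
exists g; split.
- pose k (z : option V) : nat := match z with None => 2 | Some y =>
    if y == P a then 0 else 1 end.
  apply: (inj_dec (k := k)) => -[[|[|[|m]]] hm] //=; rewrite /k.
  + by rewrite eqxx.
  + by rewrite !FP.
- move=> z; split; last first.
    move=> [[[|[|[|m]]] hm] <-] //=.
    + exact: memP. + exact: memF. + exact: memS_None.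
  case: z => [y|]; last by move=> _; exists (Ordinal (isT : (2 < 3)%N)).
  case/memSP => x /owner_cases [->|[v' -> sv']|[w' -> rw']] [->|->].
  + by exists (Ordinal (isT : (0 < 3)%N)).
  + by exists (Ordinal (isT : (1 < 3)%N)).
  + by have := nv v'; rewrite sv' eqxx.
  + by have := nv v'; rewrite sv' eqxx.
  + by have := nw w'; rewrite rw' eqxx.
  + by have := nw w'; rewrite rw' eqxx.
- move=> -[[|[|[|m]]] hm] -[[|[|[|m']]] hm'] //=;
    rewrite ?aPF ?aFP ?aFF ?aPP ?iP ?iF ?eqxx //.
- by move=> -[[|[|[|m]]] hm] //=; rewrite ?(negbTE (c_pslim C _)) ?(fa_fat C).
Qed.

Unset Implicit Arguments. Set Strict Implicit.

Theorem mainTheorem12 (V : finType) (adj : rel V) (fat : pred V)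
  (p q r : nat) (sigma : 'I_p -> 'I_r) (rho : 'I_q -> 'I_r) :
  hoffman adj fat ->
  (forall v, ~~ fat v -> #|fatN adj fat v| = 1%N) ->
  (p + q <= r)%N ->
  injective sigma -> injective rho ->
  (forall a b, sigma a != rho b) ->
  special_iso_Q adj fat sigma rho ->
  (exists (V' : finType) (adj' : rel V') (fat' : pred V') (f : V -> V')
          (S : 'I_r -> {set V'}),
     [/\ hoffman adj' fat', embeds adj fat adj' fat' f,
         (forall v', ~~ fat' v' -> exists v, f v = v'),
         decomposition adj' fat' S &
         forall i, [\/ iso_on adj' fat' (S i) adjXVI fatXVI,
                       iso_on adj' fat' (S i) adjXVII fatXVII |
                       iso_on adj' fat' (S i) adjII fatII]]) /\
  ((1 < r)%N -> reducible adj fat (-1 - tau)).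
Proof.
move=> hH hone hpqr sinj rinj sr [phi [pinj pslim psurj psign]].
have C : ctx adj fat sigma rho phi := Ctx hH hone sinj rinj sr pinj pslim psurj psign.
case: (posnP r) => [r0 | rpos].
  subst r.
  have noQ : QV p q 0 -> False.
    move: hpqr; rewrite leqn0 addn_eq0 => /andP [/eqP p0 /eqP q0]; subst p q.
    by case=> [[[a ha]|[a ha]]|[a ha]].
  have noV : V -> False.
    move=> v; case fv: (fat v).
      have [_ [_ hf2]] := hH; have [y _ /andP [fy _]] := hf2 v (in_setT v) fv.
      by have [x _] := psurj y fy; apply: noQ.
    by have [x _] := psurj v (negbT fv); apply: noQ.
  split => //.
  exists V, adj, fat, id, (fun _ => set0).
  split; [exact: hH | by split | by move=> v' _; exists v' | | by case].
  by split; [case | move=> v; case: (noV v) | case | case | case].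
pose i0 : 'I_r := Ordinal rpos.
have hemb : embeds adj fat (adjO adj (inR phi)) (fatO fat) Some.
  by split; [move=> x y []|split].
have hsl : forall v' : option V, ~~ fatO fat v' -> exists v, Some v = v'.
  by move=> [y|] // _; exists y.
have hD := decO C i0.
split.
  exists (option V), (adjO adj (inR phi)), (fatO fat), Some, (Sset adj fat sigma rho phi).
  split => //; first exact: hoffO C i0.
  by move=> i; exact: (iso_pieces C i0 i).
move=> r1; split.
  apply: (whole_lmin (adj' := adjO adj (inR phi)) (fat' := fatO fat) (s := inR phi) _ _ _ _ hD) => //.
  by move=> i; exact: (iso_pieces C i0 i).
pose i1 : 'I_r := Ordinal r1.
exists (option V), (adjO adj (inR phi)), (fatO fat), Some, (merge2 (Sset adj fat sigma rho phi) i0).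
split => //; first exact: hoffO C i0.
  exact: merge2_dec (hoffO C i0) hD.
move=> k; split.
  by apply: merge2_lmin hD _ k => i; exact: (iso_pieces C i0 i).
case: (boolP (val k == 0%N)) => hk.
  exists (phi (inr i0)); split; first exact: pslim.
  apply: (merge2_in (i := i0)); first by rewrite (memS_slim C).
  by rewrite eqxx hk.
exists (phi (inr i1)); split; first exact: pslim.
apply: (merge2_in (i := i1)); first by rewrite (memS_slim C).
by rewrite (negbTE hk).
Qed.
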